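(* Let $\mathbb{F}=\mathbb{F}_q$ be a finite field with $q$ elements, $m>1$ an integer, and $R=\mathbb{F}^{m\times m}$. Then the normalized homogeneous weight $\omega$ on $R$ is given by \[ \omega(A)=\frac{(-1)^{r+1}q^{\binom{r}{2}}}{\alpha_r(q^m)}+1,\qquad\text{where } r=\mathrm{rk}(A), \] for every $A\in R$.
   Context: $\alpha_r(x)=\prod_{i=0}^{r-1}(x-q^i)$ (so $\alpha_0=1$), and $\binom{r}{2}=r(r-1)/2$. The normalized homogeneous weight on a finite Frobenius ring $R$ is the unique map $\omega:R\to\mathbb{R}$ with $\omega(0)=0$, $\omega(x)=\omega(y)$ whenever $Rx=Ry$, and $\sum_{y\in Rx}\omega(y)=|Rx|$ for every $x\in R\setminus\{0\}$. *)

(* Defs.v *)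
From HB Require Import structures.
From mathcomp Require Import all_boot all_order all_algebra all_field.
Set Implicit Arguments. Unset Strict Implicit. Unset Printing Implicit Defensive.
Import Order.TTheory GRing.Theory Num.Theory.
Local Open Scope ring_scope.

(* The ring R = F^{m x m} of m x m matrices over a finite field F.
   (For generic m, MathComp does not provide a finPzRingType instance on
   'M[F]_m, so the notions below are stated directly for this ring, with
   ring multiplication given by matrix product *m.) *)

Definition lideal (F : finFieldType) (m : nat) (x : 'M[F]_m) : {set 'M[F]_m} :=
  [set r *m x | r : 'M[F]_m].

Definition normalized_homogeneous_weight (K : realFieldType) (F : finFieldType)
    (m : nat) (w : 'M[F]_m -> K) : Prop :=
  [/\ w 0 = 0,
      (forall x y : 'M[F]_m, lideal x = lideal y -> w x = w y) &
      (forall x : 'M[F]_m, x != 0 ->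
         \sum_(y in lideal x) w y = (#|lideal x|)%:R)].

Definition alpha (K : realFieldType) (q r : nat) (x : K) : K :=
  \prod_(i < r) (x - (q ^ i)%:R).

Definition hw_formula (K : realFieldType) (q m r : nat) : K :=
  (-1) ^+ r.+1 * (q ^ 'C(r, 2))%:R / alpha q r ((q ^ m)%:R) + 1.

(* Main.v *)
Require Import Defs.
From HB Require Import structures.
From mathcomp Require Import all_boot all_order all_algebra all_field.
From mathcomp Require Import ring lra zify.
Import Order.TTheory GRing.Theory Num.Theory.
Local Open Scope ring_scope.

Definition hh (K : realFieldType) (q m s : nat) : K :=
  (-1) ^+ s * (q ^ 'C(s, 2))%:R / alpha q s ((q ^ m)%:R).

Lemma hw_hh (K : realFieldType) q m s : hw_formula K q m s = 1 - hh K q m s.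
Proof. rewrite /hw_formula /hh exprS; ring. Qed.

Lemma alpha_neq0 (K : realFieldType) q m s : (1 < q)%N -> (s <= m)%N ->
  alpha q s ((q ^ m)%:R : K) != 0.
Proof.
move=> hq; elim: s => [|s IH] hs; first by rewrite /alpha big_ord0 oner_eq0.
rewrite /alpha big_ord_recr /= mulf_neq0 //; first by apply: IH; lia.
rewrite subr_eq0 eqr_nat; apply/eqP => /eqP; rewrite eqn_exp2l //; lia.
Qed.

Lemma hh_step (K : realFieldType) q m s : (1 < q)%N -> (s < m)%N ->
  (q ^ s)%:R * hh K q m s + ((q ^ m)%:R - (q ^ s)%:R) * hh K q m s.+1 = 0.
Proof.
move=> hq hs; rewrite /hh binS bin1 expnD natrM /alpha big_ord_recr /=.
have a0 := @alpha_neq0 K q m s hq (ltnW hs); rewrite /alpha in a0.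
have d0 : ((q ^ m)%:R - (q ^ s)%:R : K) != 0.
  rewrite subr_eq0 eqr_nat; apply/eqP => /eqP; rewrite eqn_exp2l //; lia.
rewrite exprS; field; by rewrite a0 d0.
Qed.
Lemma sum_sub (K : realFieldType) (F : finFieldType) (p n k : nat)
  (X : 'M[F]_(k, n)) (G : 'M[F]_(p, n) -> K) :
  \sum_(y | (y <= X)%MS) G y = \sum_(C : 'M[F]_(p, \rank X)) G (C *m row_base X).
Proof.
rewrite -(big_imset G (in2W (row_free_inj (row_base_free X)))) /=.
apply: eq_bigl => y; apply/idP/imsetP.
  rewrite -{1}(eq_row_base X) => /submxP[C ->]; by exists C.
by move=> [C _ ->]; apply: submx_trans (submxMl C _) _; rewrite eq_row_base.
Qed.

Lemma sum_const_sub (K : realFieldType) (F : finFieldType) (p n k : nat)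
  (X : 'M[F]_(k, n)) (c : K) :
  \sum_(y : 'M[F]_(p, n) | (y <= X)%MS) c = c *+ (#|F| ^ (p * \rank X)).
Proof. by rewrite (@sum_sub K F p n k X (fun _ => c)) sumr_const card_mx. Qed.

Lemma rank_col_in (F : fieldType) n k (v : 'rV[F]_n) (M : 'M[F]_(k, n)) :
  (v <= M)%MS -> \rank (col_mx v M) = \rank M.
Proof.
move=> vM; rewrite -addsmxE; apply: eqmx_rank.
by rewrite /eqmx addsmx_sub vM submx_refl addsmxSr.
Qed.

Lemma rank_col_out (F : fieldType) n k (v : 'rV[F]_n) (M : 'M[F]_(k, n)) :
  ~~ (v <= M)%MS -> \rank (col_mx v M) = (\rank M).+1.
Proof.
move=> vM; rewrite -addsmxE.
have h1 := mxrank_leqif_sup (addsmxSr v M).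
have h2 := mxrank_adds_leqif v M.
have h3 := rank_leq_row v.
have : \rank (v + M)%MS != \rank M.
  rewrite eq_sym; case: h1 => _ ->; apply: contra vM => H.
  exact: submx_trans (addsmxSl v M) H.
case: h1 => h1 _; case: h2 => h2 _; lia.
Qed.

Lemma key (K : realFieldType) (F : finFieldType) (m k : nat)
  (hq : (1 < #|F|)%N) (hk : (k < m)%N) :
  \sum_(D : 'M[F]_(k.+1, m)) hh K #|F| m (\rank D) = 0.
Proof.
pose g (D : 'M[F]_(1 + k, m)) := hh K #|F| m (\rank D).
have -> : \sum_(D : 'M[F]_(k.+1, m)) hh K #|F| m (\rank D)
   = \sum_(v : 'rV[F]_m) \sum_(M : 'M[F]_(k, m)) g (col_mx v M).
  rewrite pair_big /= (reindex (fun p : 'rV[F]_m * 'M[F]_(k, m) => col_mx p.1 p.2)) //.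
  exists (fun D : 'M[F]_(1 + k, m) => (usubmx D, dsubmx D)) => [[v M] _|D _] /=.
    by rewrite col_mxKu col_mxKd.
  by rewrite vsubmxK.
rewrite exchange_big /= big1 // => M _.
rewrite /g (bigID (fun v : 'rV[F]_m => (v <= M)%MS)) /=.
rewrite (eq_bigr (fun _ => hh K #|F| m (\rank M))); last by move=> v vM; rewrite rank_col_in.
rewrite [X in _ + X](eq_bigr (fun _ => hh K #|F| m (\rank M).+1)); last by move=> v vM; rewrite rank_col_out.
have hs : (\rank M < m)%N by have := rank_leq_row M; lia.
set a := hh K #|F| m (\rank M); set b := hh K #|F| m (\rank M).+1.
have tot : \sum_(v : 'rV[F]_m) b = \sum_(v : 'rV[F]_m | (v <= M)%MS) b +
   \sum_(v : 'rV[F]_m | ~~ (v <= M)%MS) b by apply: bigID.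
have e1 : \sum_(v : 'rV[F]_m) b = b *+ (#|F| ^ m) by rewrite sumr_const card_mx mul1n.
have e2 := @sum_const_sub K F 1 m k M a.
have e3 := @sum_const_sub K F 1 m k M b.
rewrite mul1n -mulr_natl in e2; rewrite mul1n -mulr_natl in e3.
rewrite -mulr_natl in e1.
have := @hh_step K #|F| m (\rank M) hq hs.
rewrite -/a -/b => st.
rewrite e2; rewrite e1 e3 in tot.
rewrite (_ : \sum_(i | ~~ (i <= M)%MS) b = ((#|F|^m)%:R - (#|F|^\rank M)%:R) * b) //.
by rewrite mulrBl tot addrC addKr.
Qed.

Lemma mem_lideal (F : finFieldType) m (x y : 'M[F]_m) : (y \in lideal x) = (y <= x)%MS.
Proof.
apply/imsetP/submxP => [[D _ ->]|[D ->]]; by exists D.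
Qed.

Lemma lideal_eq (F : finFieldType) m (x y : 'M[F]_m) : (x == y)%MS -> lideal x = lideal y.
Proof.
case/andP=> h1 h2; apply/setP => z; rewrite !mem_lideal.
by apply/idP/idP => h; [apply: submx_trans h h1 | apply: submx_trans h h2].
Qed.

Lemma key2 (K : realFieldType) (F : finFieldType) (m r : nat)
  (hq : (1 < #|F|)%N) (hr0 : (0 < r)%N) (hr : (r <= m)%N) :
  \sum_(C : 'M[F]_(m, r)) hh K #|F| m (\rank C) = 0.
Proof.
case: r hr0 hr => // k _ hk.
rewrite -[RHS](@key K F m k hq hk).
rewrite [RHS](reindex (@trmx F m k.+1)) /=; last by exists (@trmx F k.+1 m) => D _; rewrite trmxK.
by apply: eq_bigr => C _; rewrite mxrank_tr.
Qed.

Lemma exist_sum (K : realFieldType) (F : finFieldType) (m : nat)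
  (hq : (1 < #|F|)%N) (x : 'M[F]_m) : x != 0 ->
  \sum_(y in lideal x) hh K #|F| m (\rank y) = 0.
Proof.
move=> x0.
rewrite (eq_bigl (fun y => (y <= x)%MS)); last by move=> y; rewrite mem_lideal.
rewrite (@sum_sub K F m m m x (fun y => hh K #|F| m (\rank y))).
have E : forall C : 'M[F]_(m, \rank x), \rank (C *m row_base x) = \rank C.
  move=> C; apply: mxrankMfree; exact: row_base_free.
under eq_bigr => C _ do rewrite E.
apply: key2 => //; last exact: rank_leq_row.
by rewrite lt0n mxrank_eq0.
Qed.

Lemma f0 (K : realFieldType) q m : hw_formula K q m 0 = 0.
Proof. by rewrite hw_hh /hh /alpha big_ord0 /= expr0 mul1r divr1 subrr. Qed.

Theorem theorem3p2 (K : realFieldType) (F : finFieldType) (m : nat)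
    (hm : (1 < m)%N) :
  let q := #|F| in
  normalized_homogeneous_weight (fun A : 'M[F]_m => hw_formula K q m (\rank A)) /\
  (forall w : 'M[F]_m -> K, normalized_homogeneous_weight w ->
    forall A : 'M[F]_m, w A = hw_formula K q m (\rank A)).
Proof.
move=> q.
have hq : (1 < q)%N by exact: card_finNzRing_gt1.
have inl (x : 'M[F]_m) : x \in lideal x by rewrite mem_lideal submx_refl.
have Hf : normalized_homogeneous_weight (fun A : 'M[F]_m => hw_formula K q m (\rank A)).
  split.
  - by rewrite mxrank0 f0.
  - move=> x y exy; congr hw_formula; apply: eqmx_rank; apply/andP; split.
      by rewrite -mem_lideal -exy.
    by rewrite -mem_lideal exy.
  - move=> x x0; under eq_bigr => y _ do rewrite hw_hh.
    by rewrite sumrB (@exist_sum K F m hq x x0) subr0 sumr_const.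
split => // w [w0 wl ws].
case: Hf => [_ _ fs].
suff H : forall n (A : 'M[F]_m), (\rank A <= n)%N -> w A = hw_formula K q m (\rank A).
  by move=> A; apply: (H (\rank A)).
elim => [|n IH] A.
  rewrite leqn0 mxrank_eq0 => /eqP ->; by rewrite w0 mxrank0 f0.
rewrite leq_eqVlt => /orP[/eqP rA|]; last by rewrite ltnS; apply: IH.
have A0 : A != 0 by rewrite -mxrank_eq0 rA.
have := ws A A0; rewrite -(fs A A0).
rewrite [X in X = _ -> _](bigID (fun y : 'M[F]_m => (\rank y < \rank A)%N)) /=.
rewrite [X in _ = X -> _](bigID (fun y : 'M[F]_m => (\rank y < \rank A)%N)) /=.
rewrite (eq_bigr (fun y => hw_formula K q m (\rank y))); last first.
  by move=> y /andP[_ ly]; apply: IH; rewrite -ltnS -rA.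
move=> H; move: (addrI _ H) => {H}.
have same (y : 'M[F]_m) : (y \in lideal A) && ~~ (\rank y < \rank A)%N -> lideal y = lideal A.
  case/andP; rewrite mem_lideal -leqNgt => yA ry; apply: lideal_eq.
  have [_ <-] := mxrank_leqif_eq yA.
  by rewrite eqn_leq ry mxrankS.
rewrite (eq_bigr (fun _ => w A * 1)); last by move=> y /same /wl ->; rewrite mulr1.
rewrite [RHS](eq_bigr (fun _ => hw_formula K q m (\rank A) * 1)); last first.
  move=> y /same ly; rewrite mulr1; congr hw_formula; apply: eqmx_rank; apply/andP; split.
    by rewrite -mem_lideal -ly inl.
  by rewrite -mem_lideal ly inl.
rewrite -!mulr_sumr; apply: mulIf.
rewrite (bigD1 A) /=; last by rewrite inl ltnn.
rewrite gt_eqF // ltr_pwDl ?ltr01 // sumr_ge0 // => y _; exact: ler01.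
Qed.
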